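(* Let $(T,[\cdot,\cdot],[\cdot,\cdot,\cdot],\alpha)$ be a Hom-Lie-Yamaguti algebra, $(\rho,D,\theta)$ a representation of $T$ on a Hom-vector space $(\mathfrak{h},\beta)$, and $(\nu,\omega)$, $(\nu',\omega')$ two (2,3)-cocycles of $T$ with coefficients in $\mathfrak{h}$. Let $T\oplus_{(\nu,\omega)}\mathfrak{h}$ denote the Hom-Lie-Yamaguti algebra on $T\oplus\mathfrak{h}$ with structure map $\alpha+\beta$ and brackets $$[x_1+u_1,x_2+u_2]_\nu=[x_1,x_2]+\nu(x_1,x_2)+\rho(x_1)(u_2)-\rho(x_2)(u_1),$$ $$[x_1+u_1,x_2+u_2,x_3+u_3]_\omega=[x_1,x_2,x_3]+\omega(x_1,x_2,x_3)+D(x_1,x_2)(u_3)-\theta(x_1,x_3)(u_2)+\theta(x_2,x_3)(u_1),$$ and similarly for $T\oplus_{(\nu',\omega')}\mathfrak{h}$. Consider the abelian extensions $0\to\mathfrak{h}\to T\oplus_{(\nu,\omega)}\mathfrak{h}\to T\to0$ and $0\to\mathfrak{h}\to T\oplus_{(\nu',\omega')}\mathfrak{h}\to T\to0$, where the maps are the inclusion $u\mapsto u$ and the projection $x+u\mapsto x$. These two extensions are equivalent if and only if $(\nu,\omega)$ and $(\nu',\omega')$ are in the same cohomology class, i.e. $(\nu-\nu',\omega-\omega')\in B^2(T,\mathfrak{h})\times B^3(T,\mathfrak{h})$.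
   Context: Throughout, vector spaces are over an algebraically closed field $\mathbb{K}$ of characteristic different from 2 and 3. A Hom-Lie-Yamaguti algebra (HLYA) is a vector space $T$ with a linear map $\alpha:T\to T$, a bilinear map $[\cdot,\cdot]$ and a trilinear map $[\cdot,\cdot,\cdot]$ on $T$ such that for all $x_i,y_i\in T$: (HLY01) $\alpha([x_1,x_2])=[\alpha(x_1),\alpha(x_2)]$; (HLY02) $\alpha([x_1,x_2,x_3])=[\alpha(x_1),\alpha(x_2),\alpha(x_3)]$; (HLY1) $[x_1,x_2]+[x_2,x_1]=0$; (HLY2) $[x_1,x_2,x_3]+[x_2,x_1,x_3]=0$; (HLY3) $\sum_{\mathrm{cyc}(x_1,x_2,x_3)}([[x_1,x_2],\alpha(x_3)]+[x_1,x_2,x_3])=0$; (HLY4) $[[x_1,x_2],\alpha(x_3),\alpha(y_1)]+[[x_2,x_3],\alpha(x_1),\alpha(y_1)]+[[x_3,x_1],\alpha(x_2),\alpha(y_1)]=0$; (HLY5) $[\alpha(x_1),\alpha(x_2),[y_1,y_2]]=[[x_1,x_2,y_1],\alpha^2(y_2)]+[\alpha^2(y_1),[x_1,x_2,y_2]]$; (HLY6) $[\alpha^2(x_1),\alpha^2(x_2),[y_1,y_2,y_3]]=[[x_1,x_2,y_1],\alpha^2(y_2),\alpha^2(y_3)]+[\alpha^2(y_1),[x_1,x_2,y_2],\alpha^2(y_3)]+[\alpha^2(y_1),\alpha^2(y_2),[x_1,x_2,y_3]]$. A homomorphism of HLYAs is a linear map intertwining the structure maps and preserving both brackets. A representation of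 $(T,\alpha)$ on $(V,\beta)$ is a linear map $\rho:T\to\mathrm{End}(V)$ and bilinear maps $D,\theta:T\times T\to\mathrm{End}(V)$ satisfying, for all $x_i,y_i\in T$: (HR01) $\rho(\alpha(x_1))\circ\beta=\beta\circ\rho(x_1)$; (HR02) $D(\alpha(x_1),\alpha(x_2))\circ\beta=\beta\circ D(x_1,x_2)$; (HR03) $\theta(\alpha(x_1),\alpha(x_2))\circ\beta=\beta\circ\theta(x_1,x_2)$; (HR31) $D(x_1,x_2)-\theta(x_2,x_1)+\theta(x_1,x_2)+\rho([x_1,x_2])\circ\beta-\rho(\alpha(x_1))\rho(x_2)+\rho(\alpha(x_2))\rho(x_1)=0$; (HR41) $D([x_1,x_2],\alpha(x_3))+D([x_2,x_3],\alpha(x_1))+D([x_3,x_1],\alpha(x_2))=0$; (HR42) $\theta([x_1,x_2],\alpha(y_1))\circ\beta=\theta(\alpha(x_1),\alpha(y_1))\rho(x_2)-\theta(\alpha(x_2),\alpha(y_1))\rho(x_1)$; (HR51) $D(\alpha(x_1),\alpha(x_2))\rho(y_2)=\rho(\alpha^2(y_2))D(x_1,x_2)+\rho([x_1,x_2,y_2])\circ\beta^2$; (HR52) $\theta(\alpha(x_1),[y_1,y_2])\circ\beta=\rho(\alpha^2(y_1))\theta(x_1,y_2)-\rho(\alpha^2(y_2))\theta(x_1,y_1)$; (HR61) $D(\alpha^2(x_1),\alpha^2(x_2))\theta(y_1,y_2)=\theta(\alpha^2(y_1),\alpha^2(y_2))D(x_1,x_2)+\theta([x_1,x_2,y_1],\alpha^2(y_2))\circ\beta^2+\theta(\alpha^2(y_1),[x_1,x_2,y_2])\circ\beta^2$;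 (HR62) $\theta(\alpha^2(x_1),[y_1,y_2,y_3])\circ\beta^2=\theta(\alpha^2(y_2),\alpha^2(y_3))\theta(x_1,y_1)-\theta(\alpha^2(y_1),\alpha^2(y_3))\theta(x_1,y_2)+D(\alpha^2(y_1),\alpha^2(y_2))\theta(x_1,y_3)$. $C^2(T,V)$: bilinear $\nu:T\times T\to V$, antisymmetric, with $\nu(\alpha(x_1),\alpha(x_2))=\beta(\nu(x_1,x_2))$ (CC01). $C^3(T,V)$: trilinear $\omega:T^3\to V$ with $\omega(x_1,x_2,x_3)=-\omega(x_2,x_1,x_3)$ and $\omega(\alpha(x_1),\alpha(x_2),\alpha(x_3))=\beta(\omega(x_1,x_2,x_3))$ (CC02). A (2,3)-cocycle is $(\nu,\omega)\in C^2\times C^3$ satisfying for all $x_i,y_i$: (CC1) $\sum_{\mathrm{cyc}(x_1,x_2,x_3)}\big(\omega(x_1,x_2,x_3)-\rho(\alpha(x_1))\nu(x_2,x_3)+\nu([x_1,x_2],\alpha(x_3))\big)=0$; (CC2) $\sum_{\mathrm{cyc}(x_1,x_2,x_3)}\big(\theta(\alpha(x_1),\alpha(y_1))\nu(x_2,x_3)+\omega([x_1,x_2],\alpha(x_3),\alpha(y_1))\big)=0$; (CC3) $\omega(\alpha(x_1),\alpha(x_2),[y_1,y_2])+D(\alpha(x_1),\alpha(x_2))\nu(y_1,y_2)=\nu([x_1,x_2,y_1],\alpha^2(y_2))+\nu(\alpha^2(y_1),[x_1,x_2,y_2])+\rho(\alpha^2(y_1))\omega(x_1,x_2,y_2)-\rho(\alpha^2(y_2))\omega(x_1,x_2,y_1)$;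 (CC4) $\omega(\alpha^2(x_1),\alpha^2(x_2),[y_1,y_2,y_3])+D(\alpha^2(x_1),\alpha^2(x_2))\omega(y_1,y_2,y_3)=\omega([x_1,x_2,y_1],\alpha^2(y_2),\alpha^2(y_3))+\omega(\alpha^2(y_1),[x_1,x_2,y_2],\alpha^2(y_3))+\omega(\alpha^2(y_1),\alpha^2(y_2),[x_1,x_2,y_3])+\theta(\alpha^2(y_2),\alpha^2(y_3))\omega(x_1,x_2,y_1)-\theta(\alpha^2(y_1),\alpha^2(y_3))\omega(x_1,x_2,y_2)+D(\alpha^2(y_1),\alpha^2(y_2))\omega(x_1,x_2,y_3)$. $B^2(T,V)\times B^3(T,V)$ is the set of pairs $(\nu,\omega)\in C^2\times C^3$ for which there is a linear $f:T\to V$ with $f\circ\alpha=\beta\circ f$, $\nu(x_1,x_2)=\rho(x_1)f(x_2)-\rho(x_2)f(x_1)-f([x_1,x_2])$ and $\omega(x_1,x_2,x_3)=\theta(x_2,x_3)f(x_1)-\theta(x_1,x_3)f(x_2)+D(x_1,x_2)f(x_3)-f([x_1,x_2,x_3])$. Two extensions $0\to\mathfrak{h}\xrightarrow{i}\hat T\xrightarrow{p}T\to0$ and $0\to\mathfrak{h}\xrightarrow{j}\tilde T\xrightarrow{q}T\to0$ of HLYAs are equivalent if there is a HLYA homomorphism $F:\hat T\to\tilde T$ with $F\circ i=j$ and $q\circ F=p$. *)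

(* Defs.v *)
From HB Require Import structures.
From mathcomp Require Import all_boot all_algebra.
Set Implicit Arguments. Unset Strict Implicit. Unset Printing Implicit Defensive.
Import GRing.Theory.
Local Open Scope ring_scope.

Section HLYA.
Variable K : fieldType.

Definition lin (U W : lmodType K) (f : U -> W) : Prop :=
  forall (a : K) x y, f (a *: x + y) = a *: f x + f y.

Definition bilin (U W : lmodType K) (f : U -> U -> W) : Prop :=
  (forall y, lin (fun x => f x y)) /\ (forall x, lin (f x)).

Definition trilin (U W : lmodType K) (f : U -> U -> U -> W) : Prop :=
  (forall y z, lin (fun x => f x y z)) /\ (forall x z, lin (fun y => f x y z))
  /\ (forall x y, lin (f x y)).

Variable T : lmodType K.

Definition is_HLYA (alpha : T -> T) (b2 : T -> T -> T) (b3 : T -> T -> T -> T) : Prop :=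
  ( lin alpha /\ bilin b2 /\ trilin b3 /\
   (forall x1 x2, alpha (b2 x1 x2) = b2 (alpha x1) (alpha x2)) /\
   (forall x1 x2 x3, alpha (b3 x1 x2 x3) = b3 (alpha x1) (alpha x2) (alpha x3)) /\
   (forall x1 x2, b2 x1 x2 + b2 x2 x1 = 0) /\
   (forall x1 x2 x3, b3 x1 x2 x3 + b3 x2 x1 x3 = 0) /\
   (forall x1 x2 x3,
       (b2 (b2 x1 x2) (alpha x3) + b3 x1 x2 x3)
     + (b2 (b2 x2 x3) (alpha x1) + b3 x2 x3 x1)
     + (b2 (b2 x3 x1) (alpha x2) + b3 x3 x1 x2) = 0) /\
   ( (forall x1 x2 x3 y1,
       b3 (b2 x1 x2) (alpha x3) (alpha y1) + b3 (b2 x2 x3) (alpha x1) (alpha y1)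
     + b3 (b2 x3 x1) (alpha x2) (alpha y1) = 0) /\
   (forall x1 x2 y1 y2,
       b3 (alpha x1) (alpha x2) (b2 y1 y2)
     = b2 (b3 x1 x2 y1) (alpha (alpha y2)) + b2 (alpha (alpha y1)) (b3 x1 x2 y2)) /\
   (forall x1 x2 y1 y2 y3,
       b3 (alpha (alpha x1)) (alpha (alpha x2)) (b3 y1 y2 y3)
     = b3 (b3 x1 x2 y1) (alpha (alpha y2)) (alpha (alpha y3))
     + b3 (alpha (alpha y1)) (b3 x1 x2 y2) (alpha (alpha y3))
     + b3 (alpha (alpha y1)) (alpha (alpha y2)) (b3 x1 x2 y3)))).

Variable V : lmodType K.

Definition is_rep (alpha : T -> T) (b2 : T -> T -> T) (b3 : T -> T -> T -> T)
  (beta : V -> V) (rho : T -> V -> V) (D theta : T -> T -> V -> V) : Prop :=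
  let a2 x := alpha (alpha x) in
  let bt2 v := beta (beta v) in
  ( lin beta /\
      (forall v, lin (fun x => rho x v)) /\ (forall x, lin (rho x)) /\
      (forall v, bilin (fun x y => D x y v)) /\ (forall x y, lin (D x y)) /\
      (forall v, bilin (fun x y => theta x y v)) /\ (forall x y, lin (theta x y)) /\
   (forall x1 v, rho (alpha x1) (beta v) = beta (rho x1 v)) /\
   (forall x1 x2 v, D (alpha x1) (alpha x2) (beta v) = beta (D x1 x2 v)) /\
   (forall x1 x2 v, theta (alpha x1) (alpha x2) (beta v) = beta (theta x1 x2 v)) /\
   (forall x1 x2 v,
       D x1 x2 v - theta x2 x1 v + theta x1 x2 v + rho (b2 x1 x2) (beta v)
       - rho (alpha x1) (rho x2 v) + rho (alpha x2) (rho x1 v) = 0) /\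
   ( (forall x1 x2 x3 v,
       D (b2 x1 x2) (alpha x3) v + D (b2 x2 x3) (alpha x1) v + D (b2 x3 x1) (alpha x2) v = 0) /\
   (forall x1 x2 y1 v,
       theta (b2 x1 x2) (alpha y1) (beta v)
       = theta (alpha x1) (alpha y1) (rho x2 v) - theta (alpha x2) (alpha y1) (rho x1 v)) /\
   (forall x1 x2 y2 v,
       D (alpha x1) (alpha x2) (rho y2 v)
       = rho (a2 y2) (D x1 x2 v) + rho (b3 x1 x2 y2) (bt2 v)) /\
   (forall x1 y1 y2 v,
       theta (alpha x1) (b2 y1 y2) (beta v)
       = rho (a2 y1) (theta x1 y2 v) - rho (a2 y2) (theta x1 y1 v)) /\
   (forall x1 x2 y1 y2 v,
       D (a2 x1) (a2 x2) (theta y1 y2 v)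
       = theta (a2 y1) (a2 y2) (D x1 x2 v) + theta (b3 x1 x2 y1) (a2 y2) (bt2 v)
         + theta (a2 y1) (b3 x1 x2 y2) (bt2 v)) /\
   (forall x1 y1 y2 y3 v,
       theta (a2 x1) (b3 y1 y2 y3) (bt2 v)
       = theta (a2 y2) (a2 y3) (theta x1 y1 v) - theta (a2 y1) (a2 y3) (theta x1 y2 v)
         + D (a2 y1) (a2 y2) (theta x1 y3 v)))).

Definition is_C2 (alpha : T -> T) (beta : V -> V) (nu : T -> T -> V) : Prop :=
  ( bilin nu /\ (forall x1 x2, nu x1 x2 = - nu x2 x1) /\
      (forall x1 x2, nu (alpha x1) (alpha x2) = beta (nu x1 x2))).

Definition is_C3 (alpha : T -> T) (beta : V -> V) (om : T -> T -> T -> V) : Prop :=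
  ( trilin om /\ (forall x1 x2 x3, om x1 x2 x3 = - om x2 x1 x3) /\
      (forall x1 x2 x3, om (alpha x1) (alpha x2) (alpha x3) = beta (om x1 x2 x3))).

Definition is_cocycle (alpha : T -> T) (b2 : T -> T -> T) (b3 : T -> T -> T -> T)
  (beta : V -> V) (rho : T -> V -> V) (D theta : T -> T -> V -> V)
  (nu : T -> T -> V) (om : T -> T -> T -> V) : Prop :=
  let a2 x := alpha (alpha x) in
  ( is_C2 alpha beta nu /\ is_C3 alpha beta om /\
   (forall x1 x2 x3,
       (om x1 x2 x3 - rho (alpha x1) (nu x2 x3) + nu (b2 x1 x2) (alpha x3))
     + (om x2 x3 x1 - rho (alpha x2) (nu x3 x1) + nu (b2 x2 x3) (alpha x1))
     + (om x3 x1 x2 - rho (alpha x3) (nu x1 x2) + nu (b2 x3 x1) (alpha x2)) = 0) /\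
   (forall x1 x2 x3 y1,
       (theta (alpha x1) (alpha y1) (nu x2 x3) + om (b2 x1 x2) (alpha x3) (alpha y1))
     + (theta (alpha x2) (alpha y1) (nu x3 x1) + om (b2 x2 x3) (alpha x1) (alpha y1))
     + (theta (alpha x3) (alpha y1) (nu x1 x2) + om (b2 x3 x1) (alpha x2) (alpha y1)) = 0) /\
   (forall x1 x2 y1 y2,
       om (alpha x1) (alpha x2) (b2 y1 y2) + D (alpha x1) (alpha x2) (nu y1 y2)
     = nu (b3 x1 x2 y1) (a2 y2) + nu (a2 y1) (b3 x1 x2 y2)
       + rho (a2 y1) (om x1 x2 y2) - rho (a2 y2) (om x1 x2 y1)) /\
   (forall x1 x2 y1 y2 y3,
       om (a2 x1) (a2 x2) (b3 y1 y2 y3) + D (a2 x1) (a2 x2) (om y1 y2 y3)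
     = om (b3 x1 x2 y1) (a2 y2) (a2 y3) + om (a2 y1) (b3 x1 x2 y2) (a2 y3)
       + om (a2 y1) (a2 y2) (b3 x1 x2 y3)
       + theta (a2 y2) (a2 y3) (om x1 x2 y1) - theta (a2 y1) (a2 y3) (om x1 x2 y2)
       + D (a2 y1) (a2 y2) (om x1 x2 y3))).

Definition is_coboundary (alpha : T -> T) (b2 : T -> T -> T) (b3 : T -> T -> T -> T)
  (beta : V -> V) (rho : T -> V -> V) (D theta : T -> T -> V -> V)
  (nu : T -> T -> V) (om : T -> T -> T -> V) : Prop :=
  is_C2 alpha beta nu /\ is_C3 alpha beta om /\
  exists f : T -> V, ( lin f /\ (forall x, f (alpha x) = beta (f x)) /\
    (forall x1 x2, nu x1 x2 = rho x1 (f x2) - rho x2 (f x1) - f (b2 x1 x2)) /\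
    (forall x1 x2 x3, om x1 x2 x3 = theta x2 x3 (f x1) - theta x1 x3 (f x2)
                                    + D x1 x2 (f x3) - f (b3 x1 x2 x3))).

Definition sum_alpha (alpha : T -> T) (beta : V -> V) (p : T * V) : T * V :=
  (alpha p.1, beta p.2).

Definition sum_br2 (b2 : T -> T -> T) (rho : T -> V -> V) (nu : T -> T -> V)
  (p q : T * V) : T * V :=
  (b2 p.1 q.1, nu p.1 q.1 + rho p.1 q.2 - rho q.1 p.2).

Definition sum_br3 (b3 : T -> T -> T -> T) (D theta : T -> T -> V -> V)
  (om : T -> T -> T -> V) (p q r : T * V) : T * V :=
  (b3 p.1 q.1 r.1,
   om p.1 q.1 r.1 + D p.1 q.1 r.2 - theta p.1 r.1 q.2 + theta q.1 r.1 p.2).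

Definition is_HLYA_hom (W1 W2 : lmodType K)
  (a1 : W1 -> W1) (b21 : W1 -> W1 -> W1) (b31 : W1 -> W1 -> W1 -> W1)
  (a2 : W2 -> W2) (b22 : W2 -> W2 -> W2) (b32 : W2 -> W2 -> W2 -> W2)
  (F : W1 -> W2) : Prop :=
  ( lin F /\ (forall x, F (a1 x) = a2 (F x)) /\
      (forall x y, F (b21 x y) = b22 (F x) (F y)) /\
      (forall x y z, F (b31 x y z) = b32 (F x) (F y) (F z))).

(* Equivalence of the abelian extensions
   0 -> V -> T (+)_(nu,om) V -> T -> 0 and 0 -> V -> T (+)_(nu',om') V -> T -> 0
   with inclusion u |-> (0,u) and projection (x,u) |-> x. *)
Definition ext_equiv (alpha : T -> T) (b2 : T -> T -> T) (b3 : T -> T -> T -> T)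
  (beta : V -> V) (rho : T -> V -> V) (D theta : T -> T -> V -> V)
  (nu : T -> T -> V) (om : T -> T -> T -> V)
  (nu' : T -> T -> V) (om' : T -> T -> T -> V) : Prop :=
  exists F : T * V -> T * V,
    ( is_HLYA_hom (sum_alpha alpha beta) (sum_br2 b2 rho nu) (sum_br3 b3 D theta om)
                    (sum_alpha alpha beta) (sum_br2 b2 rho nu') (sum_br3 b3 D theta om') F /\
        (forall u : V, F (0, u) = (0, u)) /\
        (forall p : T * V, (F p).1 = p.1)).

End HLYA.

(* Main.v *)
Require Import Defs.
From mathcomp Require Import all_boot all_algebra.
Local Open Scope ring_scope.
Import GRing.Theory.
Set Implicit Arguments. Unset Strict Implicit.

Section Aux.
Variable K : fieldType.

Lemma lin_add (U W : lmodType K) (f : U -> W) : lin f -> forall x y, f (x + y) = f x + f y.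
Proof. by move=> H x y; rewrite -[x in LHS]scale1r H scale1r. Qed.

Lemma lin0 (U W : lmodType K) (f : U -> W) : lin f -> f 0 = 0.
Proof.
move=> H; have := lin_add H 0 0; rewrite addr0.
by move/(congr1 (fun z => z - f 0)); rewrite subrr addrK => <-.
Qed.

Lemma lin_sub (U W : lmodType K) (f : U -> W) : lin f -> forall x y, f (x - y) = f x - f y.
Proof. by move=> H x y; rewrite addrC -scaleN1r H scaleN1r addrC. Qed.

Lemma lin_diff (U W : lmodType K) (f g : U -> W) : lin f -> lin g -> lin (fun x => f x - g x).
Proof. by move=> Hf Hg a x y; rewrite Hf Hg scalerBr opprD addrACA. Qed.

Lemma bilin_diff (U W : lmodType K) (f g : U -> U -> W) : bilin f -> bilin g ->
  bilin (fun x y => f x y - g x y).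
Proof.
case=> H1 H2 [G1 G2]; split=> y; first exact: (lin_diff (H1 y) (G1 y)).
exact: (lin_diff (H2 y) (G2 y)).
Qed.

Lemma trilin_diff (U W : lmodType K) (f g : U -> U -> U -> W) : trilin f -> trilin g ->
  trilin (fun x y z => f x y z - g x y z).
Proof.
case=> H1 [H2 H3] [G1 [G2 G3]]; split; last split.
- by move=> y z; exact: (lin_diff (H1 y z) (G1 y z)).
- by move=> y z; exact: (lin_diff (H2 y z) (G2 y z)).
- by move=> y z; exact: (lin_diff (H3 y z) (G3 y z)).
Qed.

Lemma zm1 (W : zmodType) (a a' b c : W) : a + c = a' + b -> a - a' = b - c.
Proof.
move=> H; have -> : a = a' + b - c by rewrite -H addrK.
by rewrite [a' + b]addrC addrAC addrK.
Qed.

Variable T V : lmodType K.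

Lemma C2_diff alpha beta (nu nu' : T -> T -> V) : lin beta ->
  is_C2 alpha beta nu -> is_C2 alpha beta nu' ->
  is_C2 alpha beta (fun x1 x2 => nu x1 x2 - nu' x1 x2).
Proof.
move=> Hb [B [A1 E1]] [B' [A2 E2]]; split; first exact: bilin_diff.
split=> x1 x2.
  by rewrite A1 A2 opprK opprB addrC.
by rewrite E1 E2 lin_sub.
Qed.

Lemma C3_diff alpha beta (om om' : T -> T -> T -> V) : lin beta ->
  is_C3 alpha beta om -> is_C3 alpha beta om' ->
  is_C3 alpha beta (fun x1 x2 x3 => om x1 x2 x3 - om' x1 x2 x3).
Proof.
move=> Hb [B [A1 E1]] [B' [A2 E2]]; split; first exact: trilin_diff.
split=> x1 x2 x3.
  by rewrite A1 A2 opprK opprB addrC.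
by rewrite E1 E2 lin_sub.
Qed.

End Aux.

Theorem lemma4p6 (K : closedFieldType)
  (hchar2 : (2%N \notin [pchar K])) (hchar3 : (3%N \notin [pchar K]))
  (T V : lmodType K)
  (alpha : T -> T) (b2 : T -> T -> T) (b3 : T -> T -> T -> T)
  (beta : V -> V) (rho : T -> V -> V) (D theta : T -> T -> V -> V)
  (nu nu' : T -> T -> V) (om om' : T -> T -> T -> V) :
  is_HLYA alpha b2 b3 ->
  is_rep alpha b2 b3 beta rho D theta ->
  is_cocycle alpha b2 b3 beta rho D theta nu om ->
  is_cocycle alpha b2 b3 beta rho D theta nu' om' ->
  (ext_equiv alpha b2 b3 beta rho D theta nu om nu' om' <->
   is_coboundary alpha b2 b3 beta rho D theta
     (fun x1 x2 => nu x1 x2 - nu' x1 x2)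
     (fun x1 x2 x3 => om x1 x2 x3 - om' x1 x2 x3)).
Proof.
move=> _ [Hbeta [_ [Hrho [_ [HD [_ [Hth _]]]]]]] [C2 [C3 _]] [C2' [C3' _]].
have HC2 := C2_diff Hbeta C2 C2'.
have HC3 := C3_diff Hbeta C3 C3'.
split.
- case=> F [[Hlin [Hal [Hb2 Hb3]]] [Hinc Hproj]].
  pose g x := (F (x, 0)).2.
  have FE : forall x u, F (x, u) = (x, u + g x).
    move=> x u.
    have -> : (x, u) = 1 *: (x, 0) + (0, u).
      by rewrite scale1r; congr pair; rewrite ?addr0 ?add0r.
    rewrite Hlin scale1r Hinc /g.
    case E: (F (x, 0)) => [a b] /=.
    have := Hproj (x, 0); rewrite E /= => ->.
    by apply: injective_projections => /=; rewrite ?addr0 // addrC.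
  split; first exact: HC2.
  split; first exact: HC3.
  exists g; split.
    move=> a x y; rewrite /g.
    have -> : (a *: x + y, 0 : V) = a *: (x, 0) + (y, 0).
      by apply: injective_projections => /=; rewrite ?scaler0 ?addr0.
    by rewrite Hlin.
  split.
    move=> x; have := Hal (x, 0); rewrite /sum_alpha /= FE (lin0 Hbeta) FE /=.
    by case; rewrite !add0r.
  split.
    move=> x1 x2; have := Hb2 (x1, 0) (x2, 0); rewrite /sum_br2 /= !FE.
    case; rewrite !add0r !(lin0 (Hrho _)) subr0 addr0 => H.
    by apply: zm1; rewrite H addrA.
  move=> x1 x2 x3; have := Hb3 (x1, 0) (x2, 0) (x3, 0); rewrite /sum_br3 /= !FE.
  case; rewrite !add0r !(lin0 (HD _ _)) !(lin0 (Hth _ _)) ?subr0 !addr0 => H.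
  apply: zm1; rewrite H -!addrA; congr (_ + _).
  by rewrite addrC -addrA addrCA.
- case=> _ [_ [f [Hf [Hfa [Hnu Hom]]]]].
  exists (fun p => (p.1, p.2 + f p.1)); split; last first.
    by split=> // u; rewrite /= (lin0 Hf) addr0.
  split.
    move=> a p q; apply: injective_projections => //=.
    by rewrite Hf scalerDr addrACA.
  split.
    by move=> [x u]; rewrite /sum_alpha /= Hfa (lin_add Hbeta).
  split.
    move=> [x u] [y v]; rewrite /sum_br2 /=; congr pair.
    have -> : nu x y = nu' x y + (rho x (f y) - rho y (f x) - f (b2 x y)).
      by rewrite -Hnu addrC subrK.
    rewrite !(lin_add (Hrho _)).
    move: (nu' x y) (rho x (f y)) (rho y (f x)) (f (b2 x y)) (rho x v) (rho y u)
      => A B C E P Q.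
    rewrite opprD !addrA (addrAC _ (- E)) (addrAC _ (- E)) subrK.
    by rewrite (addrAC _ (- C)) (addrAC _ (- C)) (addrAC A B P).
  move=> [x u] [y v] [z w]; rewrite /sum_br3 /=; congr pair.
  have -> : om x y z = om' x y z + (theta y z (f x) - theta x z (f y)
                                    + D x y (f z) - f (b3 x y z)).
    by rewrite -Hom addrC subrK.
  rewrite !(lin_add (HD _ _)) !(lin_add (Hth _ _)).
  move: (om' x y z) (theta y z (f x)) (theta x z (f y)) (D x y (f z)) (f (b3 x y z))
    (D x y w) (theta x z v) (theta y z u) => A P Q R E d t s.
  rewrite !opprD !addrA.
  rewrite 3!(addrAC _ (- E)) subrK.
  rewrite 5!(addrAC _ P) 3!(addrAC _ (- Q)) (addrAC A R d).
  by [].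
Qed.
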